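(* Let $n\ge1$. Every configuration in $\Omega'_n$ can be divided uniquely into rectangular blocks of sizes $n\times n$, $n\times(n+1)$, $(n+1)\times n$ and $(n+1)\times(n+1)$, each containing a unique junction tile (tile of $J'_n$), located at its lower left corner.
   Context: $V_n=\{(v_0,v_1,v_2)\in\mathbb{Z}^3: 0\le v_0\le v_1\le 1,\ v_1\le v_2\le n+1\}$, elements written as words $v_0v_1v_2$. A Wang tile is $t=(a,b,c,d)$ with $\mathrm{RIGHT}(t)=a$, $\mathrm{TOP}(t)=b$, $\mathrm{LEFT}(t)=c$, $\mathrm{BOTTOM}(t)=d$; $\hat t=(b,a,d,c)$, $\hat S=\{\hat t:t\in S\}$. Define (as (right, top, left, bottom)): $W_n=\{(11(i+1),11(j+1),11i,11j):1\le i,j\le n\}$; $B'_n=\{(00(i+1),111,00i,11n):0\le i\le n\}$; $G_n=\{(01(i+1),111,00i,11(n+1)):0\le i\le n\}$; $Y_n=\{(01(i+1),112,01i,11(n+1)):1\le i\le n\}$; $A_n=\{(00(i+1),112,01i,11n):1\le i\le n\}$; $J'_n=\{((0,k,l),(0,r,s),(0,s,r+n),(0,l,k+n)):(k,l),(r,s)\in\{(0,0),(0,1),(1,1)\}\}$ (junction tiles). $\mathcal T'_n=W_n\cup B'_n\cup G_n\cup Y_n\cup A_n\cup\hat B'_n\cup\hat G_n\cup\hat Y_n\cup\hat A_n\cup J'_n$. $\Omega'_n$ is the set of configurations $x:\mathbb Z^2\to\mathcal T'_n$ with $\mathrm{RIGHT}(x(\mathbf m))=\mathrm{LEFT}(x(\mathbf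 m+\mathbf e_1))$ and $\mathrm{TOP}(x(\mathbf m))=\mathrm{BOTTOM}(x(\mathbf m+\mathbf e_2))$ for all $\mathbf m$. *)

(* Defs.v *)
From Stdlib Require Import ZArith Lia.
Open Scope Z_scope.

(* A colour is a word v0 v1 v2, represented as a triple of integers. *)
Definition color := (Z * Z * Z)%type.
Definition col (a b c : Z) : color := (a, b, c).

Definition tile := (color * color * color * color)%type.
Definition mkt (r t l b : color) : tile := (r, t, l, b).
Definition RIGHT (t : tile) : color := let '(r, _, _, _) := t in r.
Definition TOP (t : tile) : color := let '(_, tp, _, _) := t in tp.
Definition LEFT (t : tile) : color := let '(_, _, l, _) := t in l.
Definition BOTTOM (t : tile) : color := let '(_, _, _, b) := t in b.

Definition hat (t : tile) : tile := mkt (TOP t) (RIGHT t) (BOTTOM t) (LEFT t).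
Definition hatS (S : tile -> Prop) (t : tile) : Prop := exists s, S s /\ t = hat s.

Definition W_n (n : Z) (t : tile) : Prop :=
  exists i j, 1 <= i <= n /\ 1 <= j <= n /\
    t = mkt (col 1 1 (i+1)) (col 1 1 (j+1)) (col 1 1 i) (col 1 1 j).
Definition B'_n (n : Z) (t : tile) : Prop :=
  exists i, 0 <= i <= n /\ t = mkt (col 0 0 (i+1)) (col 1 1 1) (col 0 0 i) (col 1 1 n).
Definition G_n (n : Z) (t : tile) : Prop :=
  exists i, 0 <= i <= n /\ t = mkt (col 0 1 (i+1)) (col 1 1 1) (col 0 0 i) (col 1 1 (n+1)).
Definition Y_n (n : Z) (t : tile) : Prop :=
  exists i, 1 <= i <= n /\ t = mkt (col 0 1 (i+1)) (col 1 1 2) (col 0 1 i) (col 1 1 (n+1)).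
Definition A_n (n : Z) (t : tile) : Prop :=
  exists i, 1 <= i <= n /\ t = mkt (col 0 0 (i+1)) (col 1 1 2) (col 0 1 i) (col 1 1 n).

Definition kl_pair (k l : Z) : Prop :=
  (k = 0 /\ l = 0) \/ (k = 0 /\ l = 1) \/ (k = 1 /\ l = 1).

Definition J'_n (n : Z) (t : tile) : Prop :=
  exists k l r s, kl_pair k l /\ kl_pair r s /\
    t = mkt (col 0 k l) (col 0 r s) (col 0 s (r+n)) (col 0 l (k+n)).

Definition T'_n (n : Z) (t : tile) : Prop :=
  W_n n t \/ B'_n n t \/ G_n n t \/ Y_n n t \/ A_n n t \/
  hatS (B'_n n) t \/ hatS (G_n n) t \/ hatS (Y_n n) t \/ hatS (A_n n) t \/
  J'_n n t.

Definition pos := (Z * Z)%type.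
Definition config := pos -> tile.

Definition Omega' (n : Z) (x : config) : Prop :=
  (forall m, T'_n n (x m)) /\
  (forall p q, RIGHT (x (p, q)) = LEFT (x (p+1, q))) /\
  (forall p q, TOP (x (p, q)) = BOTTOM (x (p, q+1))).

Definition block := (Z * Z * Z * Z)%type.
Definition in_block (B : block) (m : pos) : Prop :=
  let '(a, b, w, h) := B in let '(p, q) := m in
  a <= p < a + w /\ b <= q < b + h.

Definition good_division (n : Z) (x : config) (P : block -> Prop) : Prop :=
  (forall a b w h, P (a, b, w, h) ->
     (w = n \/ w = n + 1) /\ (h = n \/ h = n + 1) /\
     J'_n n (x (a, b)) /\
     (forall m, in_block (a, b, w, h) m -> J'_n n (x m) -> m = (a, b))) /\
  (forall m, exists B, P B /\ in_block B m /\
     (forall B', P B' -> in_block B' m -> B' = B)).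

(* Main.v *)
Require Import Defs.
From Stdlib Require Import ZArith Lia Classical.
Open Scope Z_scope.

Definition c0 (c : color) : Z := fst (fst c).
Definition c1 (c : color) : Z := snd (fst c).
Definition c2 (c : color) : Z := snd c.

Ltac destr_all := repeat match goal with
  | H : exists _, _ |- _ => destruct H
  | H : _ /\ _ |- _ => destruct H
  | H : _ \/ _ |- _ => destruct H
  end.

Lemma tile_facts n t : 1 <= n -> T'_n n t ->
  c0 (RIGHT t) = c0 (LEFT t) /\ c0 (TOP t) = c0 (BOTTOM t) /\
  (c0 (LEFT t) = 0 \/ c0 (LEFT t) = 1) /\ (c0 (BOTTOM t) = 0 \/ c0 (BOTTOM t) = 1) /\
  (c0 (BOTTOM t) = 1 -> c2 (RIGHT t) = c2 (LEFT t) + 1 /\ 0 <= c2 (LEFT t) <= n) /\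
  (c0 (BOTTOM t) = 0 -> n <= c2 (LEFT t) <= n+1 /\
      (c0 (LEFT t) = 0 -> 0 <= c2 (RIGHT t) <= 1) /\
      (c0 (LEFT t) = 1 -> 1 <= c2 (RIGHT t) <= 2)) /\
  (c0 (LEFT t) = 0 -> c0 (BOTTOM t) = 0 ->
      0 <= c2 (TOP t) <= 1 /\ c2 (BOTTOM t) = n + c1 (RIGHT t) /\ 0 <= c1 (RIGHT t)
      /\ c1 (LEFT t) = c2 (TOP t)) /\
  (c0 (LEFT t) = 0 -> c0 (BOTTOM t) = 1 ->
      c2 (TOP t) = 1 + c1 (LEFT t) /\ c2 (BOTTOM t) = n + c1 (RIGHT t)).
Proof.
  intros Hn H.
  unfold T'_n, W_n, B'_n, G_n, Y_n, A_n, hatS, J'_n, kl_pair in H.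
  destr_all; subst; cbn [c0 c1 c2 LEFT RIGHT TOP BOTTOM mkt col hat fst snd]; lia.
Qed.

Lemma tile_J n t : T'_n n t -> c0 (LEFT t) = 0 -> c0 (BOTTOM t) = 0 -> J'_n n t.
Proof.
  intros H HL HB. unfold T'_n in H.
  destruct H as [H|[H|[H|[H|[H|[H|[H|[H|[H|H]]]]]]]]]; try exact H; exfalso;
  unfold W_n, B'_n, G_n, Y_n, A_n, hatS in H; destr_all; subst;
  cbn [c0 c1 c2 LEFT RIGHT TOP BOTTOM mkt col hat fst snd] in HL, HB; lia.
Qed.

Lemma J_tile n t : J'_n n t -> c0 (LEFT t) = 0 /\ c0 (BOTTOM t) = 0.
Proof.
  unfold J'_n; intros H; destr_all; subst; split; reflexivity.
Qed.

Lemma hat_hat t : hat (hat t) = t.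
Proof. destruct t as [[[a b] c] d]; reflexivity. Qed.

Lemma T_hat n t : T'_n n t -> T'_n n (hat t).
Proof.
  intros H; unfold T'_n in *.
  destruct H as [H|[H|[H|[H|[H|[H|[H|[H|[H|H]]]]]]]]].
  - left. destruct H as (i&j&?&?&->). exists j, i. repeat split; try lia.
  - do 5 right; left. exists t; auto.
  - do 6 right; left. exists t; auto.
  - do 7 right; left. exists t; auto.
  - do 8 right; left. exists t; auto.
  - destruct H as (s&Hs&->). rewrite hat_hat. right; left; exact Hs.
  - destruct H as (s&Hs&->). rewrite hat_hat. do 2 right; left; exact Hs.
  - destruct H as (s&Hs&->). rewrite hat_hat. do 3 right; left; exact Hs.
  - destruct H as (s&Hs&->). rewrite hat_hat. do 4 right; left; exact Hs.
  - do 9 right. destruct H as (k&l&r&s&H1&H2&->). exists r, s, k, l.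
    split; [exact H2|split;[exact H1|reflexivity]].
Qed.

Definition tr (x : config) : config := fun m => hat (x (snd m, fst m)).

Lemma tr_omega n x : Omega' n x -> Omega' n (tr x).
Proof.
  intros [HT [HR HU]]. split; [|split].
  - intros [p q]. apply T_hat, HT.
  - intros p q. exact (HU q p).
  - intros p q. exact (HR q p).
Qed.

Definition gam (x : config) p := c0 (BOTTOM (x (p,0))).
Definition rho (x : config) q := c0 (LEFT (x (0,q))).

Lemma Zconst (f : Z -> Z) : (forall p, f (p+1) = f p) -> forall p, f p = f 0.
Proof.
  intros H p. induction p using Z.peano_ind.
  - reflexivity.
  - rewrite <- Z.add_1_r, H. exact IHp.
  - rewrite <- IHp, <- (H (Z.pred p)). f_equal; lia.
Qed.

Section S.
Lemma eR n x (hx : Omega' n x) p q : LEFT (x (p+1,q)) = RIGHT (x (p,q)).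
Proof. symmetry; apply hx. Qed.
Lemma eU n x (hx : Omega' n x) p q : BOTTOM (x (p,q+1)) = TOP (x (p,q)).
Proof. symmetry; apply hx. Qed.
Lemma eU' n x (hx : Omega' n x) p q : BOTTOM (x (p,q)) = TOP (x (p,q-1)).
Proof. rewrite <- (eU n x hx). replace (q-1+1) with q by lia; reflexivity. Qed.
Lemma eR' n x (hx : Omega' n x) p q : LEFT (x (p,q)) = RIGHT (x (p-1,q)).
Proof. rewrite <- (eR n x hx). replace (p-1+1) with p by lia; reflexivity. Qed.
End S.

Lemma gam_const n x (hn : 1 <= n) (hx : Omega' n x) p q : c0 (BOTTOM (x (p,q))) = gam x p.
Proof.
  unfold gam. apply (Zconst (fun q => c0 (BOTTOM (x (p,q))))).
  intros q'. cbv beta. rewrite (eU n x hx).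
  destruct (tile_facts n _ hn (proj1 hx (p,q'))) as [_ [E _]]. exact E.
Qed.

Lemma rho_const n x (hn : 1 <= n) (hx : Omega' n x) p q : c0 (LEFT (x (p,q))) = rho x q.
Proof.
  unfold rho. apply (Zconst (fun p => c0 (LEFT (x (p,q))))).
  intros p'. cbv beta. rewrite (eR n x hx).
  destruct (tile_facts n _ hn (proj1 hx (p',q))) as [E _]. exact E.
Qed.

Lemma gam01 n x (hn : 1 <= n) (hx : Omega' n x) p : gam x p = 0 \/ gam x p = 1.
Proof. destruct (tile_facts n _ hn (proj1 hx (p,0))) as (_&_&_&E&_). exact E. Qed.
Lemma rho01 n x (hn : 1 <= n) (hx : Omega' n x) q : rho x q = 0 \/ rho x q = 1.
Proof. destruct (tile_facts n _ hn (proj1 hx (0,q))) as (_&_&E&_). exact E. Qed.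

Lemma J_iff n x (hn : 1 <= n) (hx : Omega' n x) p q :
  J'_n n (x (p,q)) <-> gam x p = 0 /\ rho x q = 0.
Proof.
  split.
  - intro HJ; destruct (J_tile _ _ HJ) as [A B].
    rewrite (rho_const n x hn hx) in A. rewrite (gam_const n x hn hx) in B. auto.
  - intros [A B]. apply tile_J. apply (proj1 hx).
    rewrite (rho_const n x hn hx); auto. rewrite (gam_const n x hn hx); auto.
Qed.

Lemma tf n x (hn : 1 <= n) (hx : Omega' n x) p q :
  (gam x p = 1 -> c2 (RIGHT (x (p,q))) = c2 (LEFT (x (p,q))) + 1 /\ 0 <= c2 (LEFT (x (p,q))) <= n) /\
  (gam x p = 0 -> n <= c2 (LEFT (x (p,q))) <= n+1 /\
      (rho x q = 0 -> 0 <= c2 (RIGHT (x (p,q))) <= 1) /\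
      (rho x q = 1 -> 1 <= c2 (RIGHT (x (p,q))) <= 2)) /\
  (rho x q = 0 -> gam x p = 0 ->
      0 <= c2 (TOP (x (p,q))) <= 1 /\ c2 (BOTTOM (x (p,q))) = n + c1 (RIGHT (x (p,q))) /\
      0 <= c1 (RIGHT (x (p,q))) /\ c1 (LEFT (x (p,q))) = c2 (TOP (x (p,q)))) /\
  (rho x q = 0 -> gam x p = 1 ->
      c2 (TOP (x (p,q))) = 1 + c1 (LEFT (x (p,q))) /\ c2 (BOTTOM (x (p,q))) = n + c1 (RIGHT (x (p,q)))).
Proof.
  rewrite <- (gam_const n x hn hx p q), <- (rho_const n x hn hx p q).
  destruct (tile_facts n _ hn (proj1 hx (p,q))) as (_&_&_&_&A&B&C&D). auto.
Qed.

Lemma run n x (hn : 1 <= n) (hx : Omega' n x) p q (k : nat) :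
  (forall i, 0 <= i < Z.of_nat k -> gam x (p+i) = 1) ->
  c2 (LEFT (x (p + Z.of_nat k, q))) = c2 (LEFT (x (p,q))) + Z.of_nat k.
Proof.
  induction k as [|k IH]; intros H.
  - cbn [Z.of_nat]. rewrite Z.add_0_r. lia.
  - rewrite Nat2Z.inj_succ.
    replace (p + Z.succ (Z.of_nat k)) with ((p + Z.of_nat k) + 1) by lia.
    rewrite (eR n x hx).
    assert (Hg : gam x (p + Z.of_nat k) = 1) by (apply H; lia).
    destruct (tf n x hn hx (p + Z.of_nat k) q) as (A&_).
    destruct (A Hg) as [E _]. rewrite E, IH; [lia|]. intros i Hi; apply H; lia.
Qed.

Lemma window n x (hn : 1 <= n) (hx : Omega' n x) p : exists i, 0 <= i <= n+1 /\ gam x (p+i) = 0.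
Proof.
  apply NNPP; intro Hc.
  assert (H1 : forall i, 0 <= i <= n + 1 -> gam x (p+i) = 1).
  { intros i Hi. destruct (gam01 n x hn hx (p+i)) as [E|E]; [|exact E].
    exfalso; apply Hc; exists i; split; [lia|exact E]. }
  pose proof (run n x hn hx p 0 (Z.to_nat (n+1))) as E.
  rewrite Z2Nat.id in E by lia.
  specialize (E ltac:(intros i Hi; apply H1; lia)).
  destruct (tf n x hn hx p 0) as (A&_).
  destruct (tf n x hn hx (p+(n+1)) 0) as (A'&_).
  specialize (A (ltac:(rewrite <- (Z.add_0_r p); apply H1; lia))).
  specialize (A' (H1 (n+1) ltac:(lia))). lia.
Qed.

Lemma first_after (f : Z -> Prop) a p : a < p -> f p ->
  exists b, a < b <= p /\ f b /\ forall j, a < j < b -> ~ f j.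
Proof.
  intros H1 H2.
  assert (G : forall k : nat, forall p, a < p -> p - a <= Z.of_nat k -> f p ->
     exists b, a < b <= p /\ f b /\ forall j, a < j < b -> ~ f j).
  { induction k as [|k IH]; intros p' Hp Hk Hf.
    - lia.
    - destruct (classic (exists j, a < j < p' /\ f j)) as [[j [Hj Hfj]]|Hn].
      + destruct (IH j ltac:(lia) ltac:(lia) Hfj) as [b [Hb [Hfb Hb']]].
        exists b. split; [lia|]. auto.
      + exists p'. split; [lia|]. split; [auto|]. intros j Hj Hfj. apply Hn; eauto. }
  apply (G (Z.to_nat (p - a)) p); auto; lia.
Qed.

Lemma last_before (f : Z -> Prop) a p : a <= p -> f a ->
  exists c, a <= c <= p /\ f c /\ forall j, c < j <= p -> ~ f j.
Proof.
  intros H1 H2.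
  assert (G : forall k : nat, forall a, a <= p -> p - a <= Z.of_nat k -> f a ->
     exists c, a <= c <= p /\ f c /\ forall j, c < j <= p -> ~ f j).
  { induction k as [|k IH]; intros a' Hp Hk Hf.
    - exists a'. split; [lia|]. split; [auto|]. intros; lia.
    - destruct (classic (exists j, a' < j <= p /\ f j)) as [[j [Hj Hfj]]|Hn].
      + destruct (IH j ltac:(lia) ltac:(lia) Hfj) as [c [Hc [Hfc Hc']]].
        exists c. split; [lia|]. auto.
      + exists a'. split; [lia|]. split; [auto|]. intros j Hj Hfj. apply Hn; eauto. }
  apply (G (Z.to_nat (p - a)) a); auto; lia.
Qed.

Lemma exists_gam0 n x (hn : 1 <= n) (hx : Omega' n x) : exists p, gam x p = 0.
Proof. destruct (window n x hn hx 0) as [i [_ H]]. eauto. Qed.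
Lemma exists_rho0 n x (hn : 1 <= n) (hx : Omega' n x) : exists q, rho x q = 0.
Proof. destruct (window n (tr x) hn (tr_omega n x hx) 0) as [i [_ H]]. exists (0+i). exact H. Qed.

Lemma exists_rho1 n x (hn : 1 <= n) (hx : Omega' n x) : exists q, rho x q = 1.
Proof.
  apply NNPP; intro Hc.
  assert (R0 : forall q, rho x q = 0).
  { intro q; destruct (rho01 n x hn hx q) as [E|E]; [auto| exfalso; apply Hc; eauto]. }
  destruct (exists_gam0 n x hn hx) as [a Ha].
  destruct (window n x hn hx (a+1)) as [i [Hi Hb0]].
  destruct (first_after (fun j => gam x j = 0) a (a+1+i)) as [b [Hb1 [Hb2 Hb3]]];
    [lia | exact Hb0 |].
  assert (Hcol : forall c, gam x c = 0 -> forall q,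
     c1 (RIGHT (x (c,q))) = 0 /\ c1 (LEFT (x (c,q))) = 1 /\ n = 1).
  { intros c Hc0 q.
    destruct (tf n x hn hx c q) as (_&_&J1&_). destruct (J1 (R0 q) Hc0) as (T1&B1&R1&L1).
    destruct (tf n x hn hx c (q-1)) as (_&_&J2&_). destruct (J2 (R0 _) Hc0) as (T2&_&_&_).
    destruct (tf n x hn hx c (q+1)) as (_&_&J3&_). destruct (J3 (R0 _) Hc0) as (_&B3&R3&_).
    rewrite (eU n x hx) in B3. rewrite (eU' n x hx) in B1. lia. }
  assert (Hind : forall k : nat, Z.of_nat k <= b - a - 1 -> forall q,
      c1 (LEFT (x (a+1+Z.of_nat k, q))) = 0).
  { induction k as [|k IH]; intros Hk q.
    - cbn [Z.of_nat]. rewrite Z.add_0_r, (eR n x hx). apply (Hcol a Ha q).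
    - rewrite Nat2Z.inj_succ.
      replace (a+1+Z.succ (Z.of_nat k)) with ((a+1+Z.of_nat k)+1) by lia.
      rewrite (eR n x hx).
      set (j := a+1+Z.of_nat k).
      assert (Gj : gam x j = 1).
      { destruct (gam01 n x hn hx j) as [E|E]; [exfalso; apply (Hb3 j); [lia|auto] | auto]. }
      destruct (tf n x hn hx j q) as (_&_&_&H1). destruct (H1 (R0 q) Gj) as (_&Bq).
      destruct (tf n x hn hx j (q-1)) as (_&_&_&H2). destruct (H2 (R0 _) Gj) as (Tq&_).
      rewrite (eU' n x hx) in Bq.
      pose proof (IH ltac:(lia) (q-1)).
      destruct (Hcol a Ha 0) as (_&_&En). subst j. lia. }
  specialize (Hind (Z.to_nat (b-a-1)) ltac:(lia) 0).
  rewrite Z2Nat.id in Hind by lia. replace (a+1+(b-a-1)) with b in Hind by lia.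
  destruct (Hcol b Hb2 0) as (_&E&_). lia.
Qed.

Lemma gap n x (hn : 1 <= n) (hx : Omega' n x) a b : a < b -> gam x a = 0 -> gam x b = 0 ->
  (forall j, a < j < b -> gam x j = 1) -> b - a = n \/ b - a = n + 1.
Proof.
  intros Hab Ha Hb Hj.
  assert (Hrun : forall q, c2 (LEFT (x (b,q))) = c2 (RIGHT (x (a,q))) + (b - a - 1)).
  { intros q. pose proof (run n x hn hx (a+1) q (Z.to_nat (b-a-1))) as E.
    rewrite Z2Nat.id in E by lia. replace (a + 1 + (b-a-1)) with b in E by lia.
    specialize (E ltac:(intros i Hi; apply Hj; lia)).
    rewrite E, (eR n x hx). reflexivity. }
  destruct (exists_rho0 n x hn hx) as [q0 Hq0].
  destruct (exists_rho1 n x hn hx) as [q1 Hq1].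
  pose proof (Hrun q0). pose proof (Hrun q1).
  destruct (tf n x hn hx a q0) as (_&A0&_). destruct (A0 Ha) as (_&A0'&_).
  destruct (tf n x hn hx b q0) as (_&B0&_). destruct (B0 Hb) as (B0'&_).
  destruct (tf n x hn hx a q1) as (_&A1&_). destruct (A1 Ha) as (_&_&A1').
  destruct (tf n x hn hx b q1) as (_&B1&_). destruct (B1 Hb) as (B1'&_).
  specialize (A0' Hq0). specialize (A1' Hq1). lia.
Qed.

Definition Pd (x : config) (B : block) : Prop :=
  let '(a,b,w,h) := B in
  gam x a = 0 /\ rho x b = 0 /\ 0 < w /\ 0 < h /\ gam x (a+w) = 0 /\ rho x (b+h) = 0 /\
  (forall j, a < j < a+w -> gam x j = 1) /\ (forall j, b < j < b+h -> rho x j = 1).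

Lemma P_unique x B1 B2 m : Pd x B1 -> Pd x B2 -> in_block B1 m -> in_block B2 m -> B1 = B2.
Proof.
  destruct B1 as [[[a1 b1] w1] h1], B2 as [[[a2 b2] w2] h2], m as [p q].
  cbn. intros (G1&R1&W1&K1&G1'&R1'&I1&J1) (G2&R2&W2&K2&G2'&R2'&I2&J2) [Hp1 Hq1] [Hp2 Hq2].
  assert (a1 = a2).
  { destruct (Z.lt_trichotomy a1 a2) as [H|[H|H]]; auto; exfalso.
    - specialize (I1 a2 ltac:(lia)); lia.
    - specialize (I2 a1 ltac:(lia)); lia. }
  subst a2.
  assert (Ew : w1 = w2).
  { destruct (Z.lt_trichotomy w1 w2) as [H|[H|H]]; auto; exfalso.
    - specialize (I2 (a1+w1) ltac:(lia)); lia.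
    - specialize (I1 (a1+w2) ltac:(lia)); lia. }
  assert (b1 = b2).
  { destruct (Z.lt_trichotomy b1 b2) as [H|[H|H]]; auto; exfalso.
    - specialize (J1 b2 ltac:(lia)); lia.
    - specialize (J2 b1 ltac:(lia)); lia. }
  subst b2.
  assert (Eh : h1 = h2).
  { destruct (Z.lt_trichotomy h1 h2) as [H|[H|H]]; auto; exfalso.
    - specialize (J2 (b1+h1) ltac:(lia)); lia.
    - specialize (J1 (b1+h2) ltac:(lia)); lia. }
  subst; reflexivity.
Qed.

Lemma Q_to_P n x (hn : 1 <= n) (hx : Omega' n x) Q :
  good_division n x Q -> forall B, Q B -> Pd x B.
Proof.
  intros [HQ1 HQ2] [[[a b] w] h] HB.
  destruct (HQ1 a b w h HB) as (Hw & Hh & HJ & Hin).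
  apply (J_iff n x hn hx) in HJ as [Ga Rb].
  assert (Ic : forall j, a < j < a+w -> gam x j = 1).
  { intros j Hj. destruct (gam01 n x hn hx j) as [E|E]; auto. exfalso.
    assert (HJ : J'_n n (x (j,b))) by (apply (J_iff n x hn hx); auto).
    specialize (Hin (j,b) ltac:(cbn; lia) HJ). injection Hin; lia. }
  assert (Ir : forall j, b < j < b+h -> rho x j = 1).
  { intros j Hj. destruct (rho01 n x hn hx j) as [E|E]; auto. exfalso.
    assert (HJ : J'_n n (x (a,j))) by (apply (J_iff n x hn hx); auto).
    specialize (Hin (a,j) ltac:(cbn; lia) HJ). injection Hin; lia. }
  assert (Gw : gam x (a+w) = 0).
  { destruct (HQ2 (a+w,b)) as [[[[a' b'] w'] h'] [HB' [Hin' _]]].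
    destruct (HQ1 _ _ _ _ HB') as (_&_&HJ'&Hin'').
    apply (J_iff n x hn hx) in HJ' as [Ga' Rb'].
    cbn in Hin'.
    destruct (Z.eq_dec a' (a+w)) as [E|E]; [subst; auto|exfalso].
    assert (a' <= a).
    { destruct (Z.le_gt_cases a' a); auto. specialize (Ic a' ltac:(lia)); lia. }
    assert (b' <= b) by lia.
    assert (HJab : J'_n n (x (a,b))) by (apply (J_iff n x hn hx); auto).
    specialize (Hin'' (a,b) ltac:(cbn; lia) HJab). injection Hin'' as Ea Eb; subst a' b'.
    destruct (HQ2 (a,b)) as [B0 [_ [_ Hu]]].
    pose proof (Hu _ HB ltac:(cbn; lia)) as E1.
    pose proof (Hu _ HB' ltac:(cbn; lia)) as E2.
    rewrite <- E2 in E1. injection E1 as ->. lia. }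
  assert (Rh : rho x (b+h) = 0).
  { destruct (HQ2 (a,b+h)) as [[[[a' b'] w'] h'] [HB' [Hin' _]]].
    destruct (HQ1 _ _ _ _ HB') as (_&_&HJ'&Hin'').
    apply (J_iff n x hn hx) in HJ' as [Ga' Rb'].
    cbn in Hin'.
    destruct (Z.eq_dec b' (b+h)) as [E|E]; [subst; auto|exfalso].
    assert (b' <= b).
    { destruct (Z.le_gt_cases b' b); auto. specialize (Ir b' ltac:(lia)); lia. }
    assert (HJab : J'_n n (x (a,b))) by (apply (J_iff n x hn hx); auto).
    specialize (Hin'' (a,b) ltac:(cbn; lia) HJab). injection Hin'' as Ea Eb; subst a' b'.
    destruct (HQ2 (a,b)) as [B0 [_ [_ Hu]]].
    pose proof (Hu _ HB ltac:(cbn; lia)) as E1.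
    pose proof (Hu _ HB' ltac:(cbn; lia)) as E2.
    rewrite <- E2 in E1. injection E1 as -> ->. lia. }
  cbn. repeat split; auto; lia.
Qed.

Theorem proposition6p4 (n : Z) (hn : 1 <= n) (x : config) (hx : Omega' n x) :
  exists P : block -> Prop, good_division n x P /\
    (forall Q : block -> Prop, good_division n x Q -> forall B, P B <-> Q B).
Proof.
  assert (GD : good_division n x (Pd x)).
  { split.
    - intros a b w h HP. cbn in HP.
      destruct HP as (Ga&Rb&Hw&Hh&Gw&Rh&Ic&Ir).
      split; [|split; [|split]].
      + pose proof (gap n x hn hx a (a+w) ltac:(lia) Ga Gw Ic). lia.
      + pose proof (gap n (tr x) hn (tr_omega n x hx) b (b+h) ltac:(lia) Rb Rh Ir). lia.
      + apply (J_iff n x hn hx); auto.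
      + intros [p q] Hin HJ. apply (J_iff n x hn hx) in HJ as [Gp Rq]. cbn in Hin.
        assert (p = a).
        { destruct (Z.eq_dec p a); auto. specialize (Ic p ltac:(lia)); lia. }
        assert (q = b).
        { destruct (Z.eq_dec q b); auto. specialize (Ir q ltac:(lia)); lia. }
        subst; reflexivity.
    - intros [p q].
      destruct (window n x hn hx (p-(n+1))) as [i [Hi Ha0]].
      destruct (last_before (fun j => gam x j = 0) (p-(n+1)+i) p ltac:(lia) Ha0)
        as [a [Ha [Hga Ha']]].
      destruct (window n x hn hx (p+1)) as [i' [Hi' Hb0]].
      destruct (first_after (fun j => gam x j = 0) a (p+1+i') ltac:(lia) Hb0)
        as [a2 [Ha2 [Hga2 Ha2']]].
      assert (p < a2).
      { destruct (Z.lt_ge_cases p a2); auto. exfalso; apply (Ha' a2); auto; lia. }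
      destruct (window n (tr x) hn (tr_omega n x hx) (q-(n+1))) as [k [Hk Hb1]].
      destruct (last_before (fun j => rho x j = 0) (q-(n+1)+k) q ltac:(lia) Hb1)
        as [b [Hb [Hrb Hb']]].
      destruct (window n (tr x) hn (tr_omega n x hx) (q+1)) as [k' [Hk' Hb2]].
      destruct (first_after (fun j => rho x j = 0) b (q+1+k') ltac:(lia) Hb2)
        as [b2 [Hb2' [Hrb2 Hb2'']]].
      assert (q < b2).
      { destruct (Z.lt_ge_cases q b2); auto. exfalso; apply (Hb' b2); auto; lia. }
      assert (HP : Pd x (a, b, a2 - a, b2 - b)).
      { cbn. replace (a + (a2 - a)) with a2 by lia. replace (b + (b2 - b)) with b2 by lia.
        repeat split; auto; try lia.
        - intros j Hj. destruct (gam01 n x hn hx j) as [E|E]; auto.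
          exfalso; apply (Ha2' j); auto.
        - intros j Hj. destruct (rho01 n x hn hx j) as [E|E]; auto.
          exfalso; apply (Hb2'' j); auto. }
      exists (a, b, a2 - a, b2 - b). split; [exact HP|split].
      + cbn; lia.
      + intros B' HB' Hin. apply (P_unique x B' (a,b,a2-a,b2-b) (p,q)); auto. cbn; lia. }
  exists (Pd x). split; [exact GD|].
  intros Q HQ B. split.
  - intros HP.
    destruct B as [[[a b] w] h].
    destruct (proj2 HQ (a,b)) as [B0 [HQB0 [HinB0 _]]].
    pose proof (Q_to_P n x hn hx Q HQ B0 HQB0) as HP0.
    assert (E : (a,b,w,h) = B0).
    { apply (P_unique x _ _ (a,b)); auto. cbn in HP |- *. lia. }
    rewrite E; exact HQB0.
  - apply (Q_to_P n x hn hx Q HQ).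
Qed.
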